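(* Let $(G,\pi)$ be a colored graph, $\mathrm{Sel}$ a cell selector, and consider the IR-tree $\Gamma=\Gamma_{\mathrm{Sel}}(G,\pi)$ with each node $\nu$ colored by the quotient graph $Q(G,\mathrm{Ref}(G,\pi,\nu))$. Let $n_1,n_2$ be nodes of $\Gamma$ at levels (depths) $l_1$ and $l_2$, respectively. (1) If $l_1\neq l_2$, then $n_1$ and $n_2$ have different colors. (2) Consider the two walks from the root to $n_1$ and to $n_2$, respectively. If some node on the first walk and some node on the second walk lie on the same level and have different colors, then $n_1$ and $n_2$ have different colors.
   Context: A coloring of a graph $G=(V,E)$ is a surjective map $\pi\colon V\to\{1,\dots,k\}$ with cells $\pi^{-1}(i)$; it is discrete if all cells are singletons; it is equitable if for all colors $i,j$ all $i$-colored vertices have the same number of $j$-colored neighbors. $\mathrm{Ref}(G,\pi,\nu)$, for a sequence $\nu$ of vertices, denotes the coarsest equitable coloring finer than $\pi$ in which each vertex of $\nu$ is a singleton with its own special individualization color (the $i$-th vertex of $\nu$ getting the $i$-th special color, these colors being distinct from all other colors), computed isomorphism-invariantly. A cell selector is an isomorphism-invariant function $\mathrm{Sel}$ assigning to $(G,\pi)$ the empty set if $\pi$ is discrete and otherwise a cell of $\pi$ of size greater than $1$. The IR-tree $\Gamma_{\mathrm{Sel}}(G,\pi)$ has as nodes sequences of vertices: the root is the empty sequence, and the children of $\nu$ are $\nu.v$ for $v\in\mathrm{Sel}(G,\mathrm{Ref}(G,\pi,\nu))$. For an equitable coloring $\rho$, the quotient graph $Q(G,\rho)$ is the complete directed graph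 with self-loops on the set of colors of $\rho$, each vertex labeled by its color and each edge $(c_1,c_2)$ labeled by the number of neighbors in cell $c_2$ of any vertex of cell $c_1$. Two nodes have the same color iff their quotient graphs are equal. *)

(* Defs.v *)
From mathcomp Require Import all_boot all_fingroup.
Set Implicit Arguments.
Unset Strict Implicit.
Unset Printing Implicit Defensive.

Definition simple_graph (V : finType) (e : rel V) : Prop :=
  symmetric e /\ irreflexive e.

Definition is_coloring (V : finType) (k : nat) (pi : V -> nat) : Prop :=
  (forall v, 0 < pi v <= k) /\ (forall i, 0 < i <= k -> exists v, pi v = i).

(* Color names used for refined colorings: isomorphism-invariant
   color-refinement histories (finite trees of naturals). *)
Definition color := GenTree.tree nat.
Definition col_le (x y : color) : bool := pickle x <= pickle y.

(* Initial coloring of Ref(G,pi,nu): the pi-color together with the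
   individualization index (i for the i-th vertex of nu, 0 if not in nu). *)
Definition wl_init (V : finType) (pi : V -> nat) (nu : seq V) : V -> color :=
  fun u => GenTree.Node 0 [:: GenTree.Leaf (pi u);
                              GenTree.Leaf (if u \in nu then (index u nu).+1 else 0)].

Definition wl_step (V : finType) (e : rel V) (c : V -> color) : V -> color :=
  fun u => GenTree.Node 1 (c u :: sort col_le (map c (filter (e u) (enum V)))).

(* Ref(G,pi,nu): after #|V| rounds the partition is stable, i.e. it is the
   coarsest equitable coloring finer than pi with nu individualized. *)
Definition Ref (V : finType) (e : rel V) (pi : V -> nat) (nu : seq V) : V -> color :=
  iter #|V| (wl_step e) (wl_init pi nu).

(* Quotient graph Q(G,rho): the (sorted) set of colors, and the complete
   directed graph with loops on it, edge (c1,c2) labelled by the number of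
   neighbours of color c2 of a (any, rho being equitable) vertex of color c1. *)
Definition colors_of (V : finType) (rho : V -> color) : seq color :=
  sort col_le (undup (map rho (enum V))).

Definition qcount (V : finType) (e : rel V) (rho : V -> color) (c1 c2 : color) : nat :=
  match [pick v | rho v == c1] with
  | Some v => #|[set w | e v w & rho w == c2]|
  | None => 0
  end.

Definition quotient (V : finType) (e : rel V) (rho : V -> color)
  : seq color * seq (color * color * nat) :=
  let cs := colors_of rho in
  (cs, [seq (c1, c2, qcount e rho c1 c2) | c1 <- cs, c2 <- cs]).

Definition cell_selector (V : finType)
  (Sel : rel V -> (V -> color) -> {set V}) : Prop :=
  forall e : rel V, simple_graph e -> forall rho : V -> color,
    (injective rho -> Sel e rho = set0) /\
    (~ injective rho ->
       exists v, Sel e rho = [set w | rho w == rho v] /\ 1 < #|Sel e rho|) /\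
    (forall phi : {perm V},
       Sel (fun x y => e ((phi^-1)%g x) ((phi^-1)%g y)) (fun x => rho ((phi^-1)%g x))
       = phi @: Sel e rho).

Inductive ir_node (V : finType) (e : rel V) (pi : V -> nat)
  (Sel : rel V -> (V -> color) -> {set V}) : seq V -> Prop :=
| ir_root : ir_node e pi Sel [::]
| ir_child nu v : ir_node e pi Sel nu -> v \in Sel e (Ref e pi nu) ->
                  ir_node e pi Sel (rcons nu v).

Definition node_color (V : finType) (e : rel V) (pi : V -> nat) (nu : seq V) :=
  quotient e (Ref e pi nu).

(* Main.v *)
Require Import Defs.
From mathcomp Require Import all_boot all_fingroup.
Set Implicit Arguments. Unset Strict Implicit. Unset Printing Implicit Defensive.

Lemma col_le_total : total col_le.
Proof. by move=> x y; rewrite /col_le leq_total. Qed.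
Lemma col_le_trans : transitive col_le.
Proof. by move=> x y z; rewrite /col_le; apply: leq_trans. Qed.
Lemma col_le_anti : antisymmetric col_le.
Proof. by move=> x y /anti_leq; apply: (pcan_inj (@pickleK _)). Qed.

Lemma sort_perm (s t : seq color) : perm_eq s t -> sort col_le s = sort col_le t.
Proof. by move/(perm_sortP col_le_total col_le_trans col_le_anti). Qed.
Lemma sort_perm' (s t : seq color) : sort col_le s = sort col_le t -> perm_eq s t.
Proof. by move/(perm_sortP col_le_total col_le_trans col_le_anti). Qed.

Section Stab.
Variables (V : finType) (e : rel V) (c0 : V -> color).
Definition Pit r := iter r (wl_step e) c0.

Lemma PS r u : Pit r.+1 u =
  GenTree.Node 1 (Pit r u :: sort col_le (map (Pit r) (filter (e u) (enum V)))).
Proof. by []. Qed.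

Lemma refine r u w : Pit r.+1 u = Pit r.+1 w -> Pit r u = Pit r w.
Proof. by rewrite !PS => -[]. Qed.

Definition stable r := [forall u, forall w, (Pit r u == Pit r w) ==> (Pit r.+1 u == Pit r.+1 w)].

Lemma stableP r : reflect (forall u w, Pit r u = Pit r w -> Pit r.+1 u = Pit r.+1 w) (stable r).
Proof.
apply: (iffP forallP) => [H u w E | H u]; last first.
  by apply/forallP => w; apply/implyP => /eqP /H ->.
by have := forallP (H u) w; rewrite E eqxx => /eqP.
Qed.

Lemma stable_S r : stable r -> stable r.+1.
Proof.
move/stableP=> H; apply/stableP => u w E.
have Ep := refine E.
pose phi c := if [pick v | Pit r v == c] is Some v then Pit r.+1 v else c.
have Hphi x : Pit r.+1 x = phi (Pit r x).
  rewrite /phi; case: pickP => [v /eqP Hv|/(_ x)]; last by rewrite eqxx.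
  by rewrite (H _ _ Hv).
have Es : sort col_le (map (Pit r) (filter (e u) (enum V))) =
          sort col_le (map (Pit r) (filter (e w) (enum V))).
  by move: E; rewrite !PS => -[].
rewrite PS [RHS]PS E; congr (GenTree.Node 1 (_ :: _)).
apply: sort_perm.
have -> : map (Pit r.+1) (filter (e u) (enum V)) = map phi (map (Pit r) (filter (e u) (enum V))).
  by rewrite -map_comp; apply: eq_map => x; exact: Hphi.
have -> : map (Pit r.+1) (filter (e w) (enum V)) = map phi (map (Pit r) (filter (e w) (enum V))).
  by rewrite -map_comp; apply: eq_map => x; exact: Hphi.
by apply: perm_map; apply: sort_perm'.
Qed.

Lemma stable_le r s : r <= s -> stable r -> stable s.
Proof.
move=> /subnK <-; elim: (s - r) => [//|n IH] H; rewrite addSn; exact: stable_S (IH H).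
Qed.

Definition reps r := [set u : V | [forall w, (Pit r w == Pit r u) ==> (enum_rank u <= enum_rank w)]].

Lemma reps_sub r : reps r \subset reps r.+1.
Proof.
apply/subsetP => u; rewrite !inE => /forallP H; apply/forallP => w; apply/implyP => /eqP E.
by have := H w; rewrite (refine E) eqxx.
Qed.

Lemma min_rep r u : exists a, Pit r a = Pit r u /\ a \in reps r.
Proof.
case: (@arg_minnP V u (fun a => Pit r a == Pit r u) (fun a => val (enum_rank a)) (eqxx _)).
move=> a /eqP Ha Hmin; exists a; split => //; rewrite inE; apply/forallP => w.
by apply/implyP => /eqP Hw; apply: Hmin; rewrite Hw Ha.
Qed.

Lemma reps_proper r : ~~ stable r -> #|reps r| < #|reps r.+1|.
Proof.
move=> Hns; apply: proper_card; rewrite properE reps_sub /=.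
apply/negP => Hsub.
case/stableP: Hns => u w E.
have [a [Ha Ra]] := min_rep r.+1 u.
have [b [Hb Rb]] := min_rep r.+1 w.
apply/eqP/negPn/negP => Hne.
have Hab : a != b by apply: contra Hne => /eqP Eab; rewrite -Ha -Hb Eab.
have Ra' := subsetP Hsub a Ra; have Rb' := subsetP Hsub b Rb.
move: Ra' Rb'; rewrite !inE => /forallP Fa /forallP Fb.
have Eab : Pit r a = Pit r b by rewrite (refine Ha) (refine Hb).
have := Fa b; have := Fb a; rewrite Eab eqxx /= => l1 l2.
move: Hab; rewrite -(inj_eq (@enum_rank_inj V)) -val_eqE.
by rewrite eqn_leq l1 l2.
Qed.

Lemma stable_end (x0 : V) : stable #|V|.-1.
Proof.
have Hn : 0 < #|V| by apply/card_gt0P; exists x0.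
suff [r [Hr Hs]] : exists r, r < #|V| /\ stable r.
  by apply: stable_le Hs; rewrite -ltnS prednK.
have : forall m, m < #|reps m| \/ exists r, r < m /\ stable r.
  elim=> [|m [IH|[r [Hr Hs]]]].
  - left; have [a [_ Ra]] := min_rep 0 x0; apply/card_gt0P; by exists a.
  - case Hs: (stable m); first by right; exists m.
    by left; apply: leq_trans (reps_proper (negbT Hs)).
  - by right; exists r; split => //; apply: ltnW.
case/(_ #|V|) => [H|//].
by have := max_card (reps #|V|); rewrite leqNgt H.
Qed.

End Stab.

Definition Hc (c1 c2 : color) : nat :=
  match c1, c2 with
  | GenTree.Node _ (_ :: l), GenTree.Node _ (x :: _) => count_mem x l
  | _, _ => 0
  end.
Definition QF (cs : seq color) := (cs, [seq (c1, c2, Hc c1 c2) | c1 <- cs, c2 <- cs]).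

Lemma Qlem (V : finType) (e : rel V) (c0 : V -> color) :
  Defs.quotient e (Pit e c0 #|V|) = QF (colors_of (Pit e c0 #|V|)).
Proof.
rewrite /Defs.quotient /QF; congr pair; apply/eq_in_allpairs => c1 c2.
rewrite /colors_of !mem_sort !mem_undup => /mapP [v1 _ ->] /mapP [w0 _ ->].
have Hs := stableP _ _ _ (stable_end e c0 v1).
have Hn : 0 < #|V| by apply/card_gt0P; exists v1.
move: Hs; case EN: #|V| Hn => [//|n] _ Hs.
rewrite /qcount; case: pickP => [v /eqP Hv|/(_ v1)]; last by rewrite eqxx.
rewrite -Hv; congr (_, _, _).
have Eq : forall w, (Pit e c0 n.+1 w == Pit e c0 n.+1 w0) = (Pit e c0 n w == Pit e c0 n w0).
  move=> w; apply/eqP/eqP; first exact: refine.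
  exact: Hs.
have HC : #|[set w | e v w & Pit e c0 n.+1 w == Pit e c0 n.+1 w0]| =
    count_mem (Pit e c0 n w0) (map (Pit e c0 n) (filter (e v) (enum V))).
  rewrite count_map count_filter cardsE cardE /enum_mem size_filter.
  rewrite count_filter; apply: eq_count => w /=.
  move: (Eq w); rewrite /Pit /= => E1; rewrite unfold_in /Pit /= E1.
  by rewrite andbT andbC.
rewrite HC [Pit e c0 n.+1 v]PS [Pit e c0 n.+1 w0]PS /=.
by rewrite (seq.permP (permEl (perm_sort col_le _))).
Qed.

Definition first (t : color) : color :=
  match t with GenTree.Node _ (a :: _) => a | _ => t end.

Lemma first_iter (V : finType) (e : rel V) c0 r u : iter r first (Pit e c0 r u) = c0 u.
Proof. by elim: r => [//|r IH]; rewrite iterSr PS. Qed.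

Definition tagof (N : nat) (c : color) : nat :=
  match iter N first c with
  | GenTree.Node _ [:: _; GenTree.Leaf t] => t
  | _ => 0 end.

Lemma tag_Ref (V : finType) (e : rel V) pi nu u :
  tagof #|V| (Ref e pi nu u) = if u \in nu then (index u nu).+1 else 0.
Proof. by rewrite /tagof /Ref -/(Pit e _ _ u) first_iter. Qed.

Lemma Ref_eq_tag (V : finType) (e : rel V) pi nu u w :
  Ref e pi nu u = Ref e pi nu w ->
  (if u \in nu then (index u nu).+1 else 0) = (if w \in nu then (index w nu).+1 else 0).
Proof. by move=> E; rewrite -(tag_Ref e pi nu u) -(tag_Ref e pi nu w) E. Qed.

Lemma max_tag (V : finType) (e : rel V) pi nu : uniq nu ->
  \max_(c <- colors_of (Ref e pi nu)) tagof #|V| c = size nu.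
Proof.
move=> Hu; apply/eqP; rewrite eqn_leq; apply/andP; split.
  apply/bigmax_leqP_seq => c; rewrite /colors_of mem_sort mem_undup => /mapP [u _ ->] _.
  by rewrite tag_Ref; case: ifP => // Hin; rewrite index_mem.
case/lastP: nu Hu => [//|nu x] Hu.
have Hx : x \in rcons nu x by rewrite mem_rcons mem_head.
have Hm : Ref e pi (rcons nu x) x \in colors_of (Ref e pi (rcons nu x)).
  by rewrite /colors_of mem_sort mem_undup map_f ?mem_enum.
apply: leq_trans (@leq_bigmax_seq _ _ xpredT (tagof #|V|) _ Hm isT).
rewrite tag_Ref Hx -cats1 index_cat; move: Hu; rewrite rcons_uniq => /andP [/negbTE -> _].
by rewrite size_cat /= eqxx addn0 addn1.
Qed.

Lemma ir_uniq (V : finType) (e : rel V) pi Sel nu :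
  simple_graph e -> cell_selector Sel -> ir_node e pi Sel nu -> uniq nu.
Proof.
move=> He HS; elim=> [//|{}nu v _ IH Hv]; rewrite rcons_uniq IH andbT.
have [Hinj [Hnon _]] := HS e He (Ref e pi nu).
case: (boolP (injectiveb (Ref e pi nu))) => [/injectiveP/Hinj E|/injectiveP Hni].
  by move: Hv; rewrite E inE.
have [v0 [E Hc]] := Hnon Hni.
have Hvv0 : Ref e pi nu v = Ref e pi nu v0 by move: Hv; rewrite E inE => /eqP.
have : [exists w in Sel e (Ref e pi nu), w != v].
  apply: contraT; rewrite negb_exists_in => /forall_inP H.
  have : Sel e (Ref e pi nu) \subset [set v].
    by apply/subsetP => w Hw; rewrite inE; have := H w Hw; rewrite negbK.
  by move/subset_leq_card; rewrite cards1 leqNgt Hc.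
case/exists_inP => w Hw Hwv.
have Hwv' : Ref e pi nu w = Ref e pi nu v by move: Hw; rewrite E inE Hvv0 => /eqP.
apply/negP => Hin; move: (Ref_eq_tag Hwv'); rewrite Hin.
case: ifP => // Hwin [] /(congr1 (nth v nu)); rewrite !nth_index // => Ewv.
by move: Hwv; rewrite Ewv eqxx.
Qed.

Fixpoint trunc (l r : nat) (t : color) : color :=
  match r with
  | 0 => match t with
         | GenTree.Node n [:: a; GenTree.Leaf t'] =>
             GenTree.Node n [:: a; GenTree.Leaf (if t' <= l then t' else 0)]
         | _ => t end
  | r'.+1 => match t with
             | GenTree.Node n (c :: ls) =>
                 GenTree.Node n (trunc l r' c :: sort col_le (map (trunc l r') ls))
             | _ => t end
  end.

Lemma trunc_init (V : finType) (pi : V -> nat) nu l u :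
  trunc l 0 (wl_init pi nu u) = wl_init pi (take l nu) u.
Proof.
rewrite /wl_init /=; congr (GenTree.Node 0 [:: _; GenTree.Leaf _]).
case: (boolP (u \in nu)) => Hin.
  rewrite (in_take _ Hin); case: ltnP => Hl.
    congr S; have := congr1 (index u) (cat_take_drop l nu).
    by rewrite index_cat (in_take _ Hin) Hl => ->.
  by [].
have -> : (u \in take l nu) = false.
  by apply/negbTE; apply: contra Hin; apply: mem_take.
by [].
Qed.

Lemma trunc_Pit (V : finType) (e : rel V) (pi : V -> nat) nu l r u :
  trunc l r (Pit e (wl_init pi nu) r u) = Pit e (wl_init pi (take l nu)) r u.
Proof.
elim: r u => [|r IH] u; first exact: trunc_init.
rewrite !PS /= IH; congr (GenTree.Node 1 (_ :: _)).
apply: sort_perm; apply: perm_trans (perm_map _ (permEl (perm_sort _ _))) _.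
have H : trunc l r \o Pit e (wl_init pi nu) r =1 Pit e (wl_init pi (take l nu)) r.
  by move=> x; exact: IH.
by rewrite -map_comp (eq_map H).
Qed.

Lemma colors_take (V : finType) (e : rel V) (pi : V -> nat) nu l :
  colors_of (Ref e pi (take l nu)) =
  sort col_le (undup (map (trunc l #|V|) (colors_of (Ref e pi nu)))).
Proof.
rewrite /colors_of; apply: sort_perm; apply: uniq_perm; rewrite ?undup_uniq //.
move=> x; rewrite !mem_undup.
have -> : map (Ref e pi (take l nu)) (enum V) =
          map (trunc l #|V|) (map (Ref e pi nu) (enum V)).
  rewrite -map_comp; apply: eq_map => u /=; rewrite /Ref -/(Pit e _ _ u).
  by rewrite trunc_Pit.
by apply: eq_mem_map => y; rewrite mem_sort mem_undup.
Qed.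
Unset Implicit Arguments.

Theorem lemma8 (V : finType) (e : rel V) (k : nat) (pi : V -> nat)
  (Sel : rel V -> (V -> color) -> {set V}) :
  simple_graph e -> is_coloring k pi -> cell_selector Sel ->
  forall n1 n2 : seq V, ir_node e pi Sel n1 -> ir_node e pi Sel n2 ->
  (size n1 <> size n2 -> node_color e pi n1 <> node_color e pi n2) /\
  ((exists l, l <= size n1 /\ l <= size n2 /\
      node_color e pi (take l n1) <> node_color e pi (take l n2)) ->
   node_color e pi n1 <> node_color e pi n2).
Proof.
move=> He _ HS n1 n2 H1 H2.
have NC : forall nu, node_color e pi nu = QF (colors_of (Ref e pi nu)).
  by move=> nu; exact: (Qlem e (wl_init pi nu)).
split.
  move=> Hsz; rewrite !NC => -[] Ec _; apply: Hsz.
  by rewrite -(max_tag e pi (ir_uniq He HS H1)) -(max_tag e pi (ir_uniq He HS H2)) Ec.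
move=> [l [_ [_ Hne]]]; rewrite !NC => -[] Ec _; apply: Hne.
by rewrite !NC !colors_take Ec.
Qed.
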